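(* Let $N\geq 2$ be an integer. For real $\theta$ and $\varepsilon\geq 0$ let $$G_\theta(\varepsilon)=(1+\theta)^N+\big(1-\theta(1+\varepsilon)\big)^N-2,$$ and define the critical uncertainty bound $\varepsilon_c(\theta)=\inf\{\varepsilon>0: G_\theta(\varepsilon)\leq 0\}$, with the convention $\inf\emptyset=+\infty$. Then for every $\theta>0$, $$\varepsilon_c(\theta)=\begin{cases}+\infty, & N\text{ even and }\theta>2^{1/N}-1,\\[3pt] \dfrac{1-\big(2-(1+\theta)^N\big)^{1/N}}{\theta}-1, & \text{otherwise.}\end{cases}$$
   Context: Root convention: for real $X>0$ and positive integer $N$, $X^{1/N}$ denotes the unique positive real $N$-th root; for $X<0$ and $N$ odd, $X^{1/N}=-|X|^{1/N}$; for $X=0$, $X^{1/N}=0$. (The case $X<0$ with $N$ even does not arise in the formula.) *)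

(* Defs.v *)
From HB Require Import structures.
From mathcomp Require Import all_boot all_order all_algebra.
From mathcomp Require Import all_classical all_reals all_analysis.
Set Implicit Arguments. Unset Strict Implicit. Unset Printing Implicit Defensive.
Import Order.TTheory GRing.Theory Num.Theory.
Local Open Scope ring_scope.

(* Real N-th root convention: positive root for X > 0, 0 for X = 0,
   -|X|^(1/N) for X < 0 (used only with N odd in the theorem). *)
Definition real_root {R : realType} (N : nat) (X : R) : R :=
  if 0 <= X then powR X (N%:R^-1) else - powR (- X) (N%:R^-1).

Definition G {R : realType} (N : nat) (theta eps : R) : R :=
  (1 + theta) ^+ N + (1 - theta * (1 + eps)) ^+ N - 2.

Definition eps_c {R : realType} (N : nat) (theta : R) : \bar R :=
  ereal_inf [set (e%:E) | e in [set e : R | 0 < e /\ G N theta e <= 0]].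

(* Main.v *)
Require Import Defs.
From HB Require Import structures.
From mathcomp Require Import all_boot all_order all_algebra.
From mathcomp Require Import all_classical all_reals all_analysis.
From mathcomp Require Import ring lra.
Import Order.TTheory GRing.Theory Num.Theory.
Local Open Scope ring_scope.

Lemma powN_ltr (R : realType) (N : nat) (x y : R) : (0 < N)%N -> (ssrnat.odd N || (0 <= x)) ->
  x < y -> x ^+ N < y ^+ N.
Proof.
move=> N0 hc xy.
have [x0|x0] := leP 0 x.
  rewrite ltrXn2r //.
  by rewrite -lt0n.
move: hc; rewrite leNgt x0 orbF => hodd.
have [y0|y0] := leP 0 y.
  by apply: (lt_le_trans (y:=0)); rewrite ?exprn_odd_lt0 ?exprn_odd_ge0.
have h : (- y) ^+ N < (- x) ^+ N.
  have := @ltrXn2r _ N (-y) (-x).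
  rewrite oppr_ge0 ltrN2 -lt0n N0.
  apply; [exact: ltW | exact: xy].
have hN z : (- z) ^+ N = - z ^+ N by rewrite exprNn -signr_odd hodd expr1 mulN1r.
by move: h; rewrite !hN ltrN2.
Qed.

Lemma F1 (R : realType) (N : nat) (t : R) : 0 < t -> (2 <= N)%N -> 2 < (1 + t) ^+ N + (1 - t) ^+ N.
Proof.
move=> t0 /subnK <-; elim: (N - 2)%N => [|k IH].
  rewrite add0n !expr2.
  nra.
have hb : (1 - t) ^+ (k + 2) <= (1 + t) ^+ (k + 2).
  apply: le_trans (ler_norm _) _; rewrite normrX lerXn2r ?nnegrE ?normr_ge0 //.
    apply: ltW.
    lra.
  rewrite ler_norml; apply/andP; split.
  lra.
  lra.
rewrite addSn !exprS.
move: hb IH.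
set A := (1 + t) ^+ (k + 2); set B := (1 - t) ^+ (k + 2).
move=> hb IH.
nra.
Qed.

Lemma root_pow (R : realType) (N : nat) (x : R) : (0 < N)%N -> 0 <= x -> (powR x (N%:R^-1)) ^+ N = x.
Proof.
move=> N0 x0; rewrite -powR_mulrn ?powR_ge0 // -powRrM mulVf ?powRr1 //.
by rewrite pnatr_eq0 -lt0n.
Qed.

Theorem lemma1 (R : realType) (N : nat) (hN : (2 <= N)%N) (theta : R)
  (htheta : 0 < theta) :
  eps_c N theta =
    (if ~~ ssrnat.odd N && (real_root N 2 - 1 < theta) then +oo%E
     else ((1 - real_root N (2 - (1 + theta) ^+ N)) / theta - 1)%:E).
Proof.
have N0 : (0 < N)%N by apply: leq_trans hN.
have hF := @F1 R N theta htheta hN.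
set c := 2 - (1 + theta) ^+ N.
have Hs : (real_root N 2 - 1 < theta) = (c < 0).
  have h2 : (0:R) <= 2 by lra.
  rewrite /real_root h2.
  set s := powR 2 N%:R^-1.
  have hs : s ^+ N = 2 by apply: root_pow.
  have s0 : 0 <= s by apply: powR_ge0.
  rewrite /c subr_lt0; apply/idP/idP.
    move=> h; rewrite -[X in X < _]hs; apply: powN_ltr => //; first by rewrite s0 orbT.
    lra.
  move=> h; rewrite ltNge; apply/negP => h'.
  have : (1 + theta) ^+ N <= s ^+ N.
    apply: (lerXn2r N); rewrite ?nnegrE //; lra.
  rewrite hs; lra.
rewrite Hs.
case: ifP => [/andP [hev hc] | hnot].
  apply/eqP; rewrite eq_le leey /=; apply: le_ereal_inf_tmp => _ [e [e0 hG] <-].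
  exfalso; move: hG; rewrite /G.
  have := exprn_even_ge0 (1 - theta * (1 + e)) hev.
  move: hc; rewrite /c.
  set A := (1 + theta) ^+ N; set B := (1 - theta * (1 + e)) ^+ N.
  move=> *; lra.
have hr : ssrnat.odd N || (0 <= c).
  by move: hnot; case: (ssrnat.odd N) => //= /negbT; rewrite -leNgt.
set r := real_root N c.
have [hrN hro] : r ^+ N = c /\ (ssrnat.odd N || (0 <= r)).
  rewrite /r /real_root; case: ifP => hc0.
    by split; [exact: root_pow | by rewrite powR_ge0 orbT].
  have hodd : ssrnat.odd N by move: hr; rewrite hc0 orbF.
  split; last by rewrite hodd.
  rewrite exprNn -signr_odd hodd expr1 mulN1r root_pow ?opprK //.
  by rewrite oppr_ge0 ltW // ltNge hc0.
have hrt : r < 1 - theta.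
  rewrite ltNge; apply/negP => hle.
  case hodd: (ssrnat.odd N).
    have : (1 - theta) ^+ N <= r ^+ N.
      case: (eqVneq (1 - theta) r) => [->//| hne].
      apply: ltW; apply: powN_ltr => //; first by rewrite hodd.
      by rewrite lt_neqAle hne hle.
    rewrite hrN /c; move: hF.
    set A := (1 + theta) ^+ N; set B := (1 - theta) ^+ N.
    move=> *; lra.
  have c0 : 0 <= c by move: hr; rewrite hodd.
  have ht1 : theta < 1.
    have h1 : 1 <= (1 + theta) ^+ (N - 2) by apply: exprn_ege1; lra.
    have : (1 + theta) ^+ N = (1 + theta) ^+ (N - 2) * (1 + theta) ^+ 2.
      by rewrite -exprD subnK.
    move: c0; rewrite /c => c0 hE; move: c0; rewrite hE.
    set X := (1 + theta) ^+ (N - 2) in h1 *.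
    rewrite expr2 => c0; nra.
  have : (1 - theta) ^+ N <= r ^+ N.
    apply: (lerXn2r N); rewrite ?nnegrE //; lra.
  rewrite hrN /c; move: hF.
  set A := (1 + theta) ^+ N; set B := (1 - theta) ^+ N.
  move=> *; lra.
have e0pos : 0 < (1 - r) / theta - 1.
  by rewrite subr_gt0 ltr_pdivlMr // mul1r; lra.
apply/eqP; rewrite eq_le; apply/andP; split.
  apply: ereal_inf_lbound; exists ((1 - r) / theta - 1) => //; split => //.
  rewrite /G.
  have -> : 1 - theta * (1 + ((1 - r) / theta - 1)) = r.
    by field; rewrite gt_eqF.
  rewrite hrN /c; lra.
apply: le_ereal_inf_tmp => _ [e [e0 hG] <-]; rewrite lee_fin.
have hu : 1 - theta * (1 + e) <= r.
  rewrite leNgt; apply/negP => hlt.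
  have := @powN_ltr R N _ _ N0 hro hlt.
  move: hG; rewrite /G hrN /c.
  set A := (1 + theta) ^+ N; set B := (1 - theta * (1 + e)) ^+ N.
  move=> *; lra.
rewrite lerBlDr ler_pdivrMr //; nra.
Qed.
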